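(* Let $p>5$ be a prime with $p\equiv 3\pmod 4$. Then $$\binom{-1/4}{\frac{p-1}{2}}^{-1}\equiv\frac{(-1)^{(p+1)/4}}{\binom{(p-1)/2}{(p-3)/4}}\bigl(1-3p+p\,q_p(2)\bigr)\pmod{p^2}.$$
   Context: $q_p(2)=(2^{p-1}-1)/p$ is the Fermat quotient. For a rational $a$ and integer $n\ge0$, $\binom{a}{n}=a(a-1)\cdots(a-n+1)/n!$. For rationals $a,b$ with denominators prime to $p$, $a\equiv b\pmod{p^m}$ means $(a-b)/p^m$ has denominator prime to $p$. *)

(* Defs.v *)
From HB Require Import structures.
From mathcomp Require Import all_boot all_order all_algebra.
Set Implicit Arguments. Unset Strict Implicit. Unset Printing Implicit Defensive.
Import Order.TTheory GRing.Theory Num.Theory.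
Local Open Scope ring_scope.

Definition binq (a : rat) (n : nat) : rat :=
  (\prod_(i < n) (a - (i : nat)%:R)) / (n`!)%:R.

Definition fermat_q2 (p : nat) : rat := ((2 ^ p.-1 - 1)%N)%:R / p%:R.

Definition p_integral (p : nat) (a : rat) : Prop := coprime p `|denq a|%N.

Definition congr_rat (p m : nat) (a b : rat) : Prop :=
  [/\ p_integral p a, p_integral p b & p_integral p ((a - b) / (p ^ m)%:R)].

(* Main.v *)
Require Import Defs.
From HB Require Import structures.
From mathcomp Require Import all_boot all_order all_algebra.
From mathcomp Require Import zify ring lra.
Import Order.TTheory GRing.Theory Num.Theory.
Local Open Scope ring_scope.

Lemma pint_frac (p : nat) (x : rat) (r : rat) (b : nat) :
  coprime p b -> (0 < b)%N -> r \is a Num.int -> x = r / b%:R -> p_integral p x.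
Proof.
move=> cpb b0 /intrP [a ->] ->; rewrite /p_integral.
have -> : (b%:R : rat) = (b%:Z)%:~R by [].
have : (0 < b%:Z)%R by rewrite ltz_nat.
have : coprime p `|b%:Z| by [].
move: (b%:Z) => bz {cpb b0} cpb b0.
case: divqP cpb b0 => [h|k y kn0] cpb b0; first by rewrite ltxx in b0.
 apply: (coprime_dvdr _ cpb).
rewrite abszM; exact: dvdn_mull.
Qed.

Lemma prodP_eq (m : nat) :
  \prod_(i < (m + m).+1) ((4 * i + 1)%N%:Z) =
  \prod_(l < m) (((4 * m + 3)%N%:Z) ^+ 2 - ((4 * l + 2)%N%:Z) ^+ 2).
Proof.
rewrite big_ord_recl /= mul1r big_split_ord /=.
rewrite (reindex_inj rev_ord_inj) /= -big_split /=.
apply: eq_bigr => i _; rewrite /bump /=.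
have hi := ltn_ord i.
have e1 : ((4 * (1 + (m - i.+1)) + 1)%N%:Z = 4 * m%:Z + 1 - 4 * i%:Z) by lia.
have e2 : ((4 * (1 + (m + i)) + 1)%N%:Z = 4 * m%:Z + 5 + 4 * i%:Z) by lia.
have e3 : ((4 * m + 3)%N%:Z = 4 * m%:Z + 3) by lia.
have e4 : ((4 * i + 2)%N%:Z = 4 * i%:Z + 2) by lia.
rewrite e1 e2 e3 e4; ring.
Qed.

Lemma prod_mod (x : int) (c : nat -> int) (m : nat) :
  (x %| \prod_(l < m) (x - c l) - \prod_(l < m) (- c l))%Z.
Proof.
elim: m => [|m IH]; first by rewrite !big_ord0 subrr dvdz0.
rewrite !big_ord_recr /=.
have -> : \prod_(i < m) (x - c i) * (x - c m) - \prod_(i < m) - c i * - c m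
  = (\prod_(i < m) (x - c i) - \prod_(i < m) - c i) * (- c m)
    + x * \prod_(i < m) (x - c i) by ring.
by rewrite rpredD // dvdz_mulr.
Qed.

Lemma fact_odd (m : nat) :
  ((m + m).+1`! = (m + m).+1 * \prod_(l < m) (4 * l + 2) * m`!)%N.
Proof.
elim: m => [|m IH]; first by rewrite big_ord0.
rewrite big_ord_recr /= !addnS !addSn.
rewrite (factS (m+m).+2) (factS (m+m).+1) IH factS.
set P := (\prod_(_ < _) _)%N.
set F := m`!.
rewrite addn0 -!mulnA; congr (_ * _)%N; ring.
Qed.

Lemma prod_binq (n : nat) :
  \prod_(i < n) (- (1 / 4%:R) - (i : nat)%:R : rat) =
  (-1) ^+ n * ((\prod_(i < n) (4 * i + 1))%N)%:R / 4%:R ^+ n.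
Proof.
elim: n => [|n IH].
  by rewrite !big_ord0 !expr0 divr1 mulr1.
rewrite !big_ord_recr /= IH natrM !exprS natrD natrM.
field; by rewrite expf_neq0.
Qed.

Lemma fermat2 (p : nat) : prime p -> (2 < p)%N -> exists q : nat, (2 ^ p.-1 = q * p + 1)%N.
Proof.
move=> pp p2.
have h := fermat_little 2 pp.
have hp : (p = p.-1.+1)%N by lia.
have cp2 : coprime p 2 by rewrite prime_coprime // dvdn_prime2 //; apply/eqP; lia.
have : (p %| 2 ^ p.-1 - 1)%N.
  rewrite -(div.Gauss_dvdr _ cp2) mulnBr muln1 -expnS -hp.
  apply/eqP; rewrite -[in RHS](mod0n p); apply/eqP.
  rewrite -(eqn_modDr 2) subnK.
    by rewrite add0n h.
  by rewrite -{1}(expn1 2) leq_pexp2l //; lia.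
case/dvdnP => q hq; exists q.
rewrite -hq subnK // expn_gt0 //.
Qed.

Lemma cop_fact p k : prime p -> (k < p)%N -> coprime p k`!.
Proof.
move=> pp; elim: k => [|k IH] hk; first by rewrite fact0 coprimen1.
rewrite factS coprimeMr IH ?andbT; last by lia.
rewrite prime_coprime //; apply/negP => /(dvdn_leq (ltn0Sn k)); lia.
Qed.

Lemma cop_P p m : prime p -> p = (4 * m + 3)%N ->
  coprime p (\prod_(i < (m + m).+1) (4 * i + 1)).
Proof.
move=> pp hp; apply: (big_ind (coprime p)) => //; first exact: coprimen1.
  by move=> x y hx hy; rewrite coprimeMr hx hy.
move=> i _; have hi := ltn_ord i.
rewrite prime_coprime //; apply/negP => /dvdnP [k hk].
move: hk; rewrite hp => hk.
case: k hk => [|[|k]] hk; nia.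
Qed.

Theorem lemma2p3 (p : nat) (pp : prime p) (p_gt5 : (5 < p)%N) (p3 : (p %% 4 = 3)%N) :
  congr_rat p 2
    (binq (- (1 / 4%:R)) (p.-1 %/ 2))^-1
    ((-1) ^+ ((p + 1) %/ 4) / ('C((p.-1) %/ 2, (p - 3) %/ 4))%:R
       * (1 - 3 * p%:R + p%:R * fermat_q2 p)).
Proof.
move: (divn_eq p 4); rewrite p3; move: (p %/ 4)%N => m hp.
have hp' : p = (4 * m + 3)%N by lia.
have hn : (p.-1 %/ 2 = (m+m).+1)%N by rewrite hp'; lia.
have h1 : ((p+1) %/ 4 = m.+1)%N by rewrite hp'; lia.
have h2 : ((p-3) %/ 4 = m)%N by rewrite hp'; lia.
rewrite hn h1 h2.
set n := (m+m).+1.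
have [q hq] := fermat2 p pp (ltnW (ltnW (ltnW p_gt5))).
have p0 : (p%:R : rat) != 0 by rewrite pnatr_eq0; lia.
have hfq : fermat_q2 p = q%:R.
  by rewrite /fermat_q2 hq addnK natrM mulfK.
have hT : (4%:R : rat) ^+ n = q%:R * p%:R + 1.
  have e : (2 ^ (n + n) = q * p + 1)%N by rewrite -hq; congr (2 ^ _)%N; rewrite hp'; lia.
  have e4 : (4 ^ n = 2 ^ (n + n))%N by rewrite addnn -mul2n expnM.
  by rewrite -natrX e4 e natrD natrM.
have hmn : (m <= n)%N by rewrite /n; lia.
have hnm : (n - m = m.+1)%N by rewrite /n; lia.
have f0 : forall k, (k`!%:R : rat) != 0 by move=> k; rewrite pnatr_eq0 -lt0n fact_gt0.
have hC : ('C(n, m)%:R : rat) = n`!%:R / (m`!%:R * m.+1`!%:R).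
  by rewrite -(bin_fact hmn) hnm natrM natrM (mulfK (mulf_neq0 (f0 m) (f0 m.+1))).
set P := (\prod_(i < n) (4 * i + 1))%N.
have hB : binq (- (1 / 4%:R)) n = - (P%:R / 4%:R ^+ n) / n`!%:R.
  rewrite /binq prod_binq -signr_odd (_ : odd n = true); last by rewrite /n /= oddD addbb.
  rewrite expr1 mulN1r.
  by rewrite mulNr.
set S := (\prod_(l < m) (4 * l + 2))%N.
have hnf : n`! = (n * S * m`!)%N by exact: fact_odd.
have [K hK] : exists K : int, (P%:R : rat) = (-1) ^+ m * (S%:R) ^+ 2 + K%:~R * (p%:R) ^+ 2.
  have e1 := prodP_eq m.
  have := prod_mod (((4 * m + 3)%N%:Z) ^+ 2) (fun l => ((4 * l + 2)%N%:Z) ^+ 2) m.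
  case/dvdzP => K hK'; exists K.
  have hPz : (P%:Z) = \prod_(l < m) (- ((4 * l + 2)%N%:Z) ^+ 2) + K * ((4 * m + 3)%N%:Z) ^+ 2.
    rewrite -hK' -e1 addrC subrK -natz natr_prod; apply: eq_bigr => i _; by rewrite natz.
  have -> : (P%:R : rat) = (P%:Z)%:~R by [].
  rewrite hPz rmorphD rmorphM /= rmorph_prod /=.
  under eq_bigr => i _ do rewrite rmorphN rmorphXn /= -mulN1r.
  rewrite big_split /= prodr_const card_ord prodrXl rmorphXn /= hp' natr_prod.
  by [].
have cP : coprime p P by exact: cop_P.
have P0 : (0 < P)%N by rewrite lt0n; apply/eqP => h; move: cP; rewrite h /coprime gcdn0 => /eqP; lia.
have cN : coprime p n`! by apply: cop_fact => //; rewrite hp' /n; lia.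
have PR0 : (P%:R : rat) != 0 by rewrite pnatr_eq0 -lt0n.
have T0 : (q%:R * p%:R + 1 : rat) != 0 by rewrite -hT expf_neq0 // pnatr_eq0.
rewrite hB hC hfq hT; split.
- apply: (@pint_frac p _ (- (n`!%:R * (q%:R * p%:R + 1))) _ cP P0).
    by rewrite !(rpredD, rpredM, rpredN, rpred1, natr_int).
  by field; rewrite f0 PR0 T0.
- apply: (@pint_frac p _ (- (-1) ^+ m * (m`!%:R * (m.+1)`!%:R * (1 - 3 * p%:R + p%:R * q%:R))) _ cN (fact_gt0 n)).
    by rewrite !(rpredD, rpredM, rpredN, rpredB, rpredX, rpred1, natr_int).
  rewrite exprS mulN1r.
  by field; rewrite !f0.
have cPN : coprime p (P * n`!) by rewrite coprimeMr cP cN.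
have PN0 : (0 < P * n`!)%N by rewrite muln_gt0 P0 fact_gt0.
apply: (@pint_frac p _ (- (S%:R ^+ 2 * m`!%:R ^+ 2 * (1 + m%:R * q%:R))
   + (-1) ^+ m * K%:~R * m`!%:R * (m.+1)`!%:R * (q%:R * p%:R + 1 - 3 * p%:R)) _ cPN PN0).
  by rewrite !(rpredD, rpredM, rpredN, rpredB, rpredX, rpred1, natr_int, intr_int).
have S0 : (S%:R : rat) != 0.
  apply/eqP => h; move: (f0 n); rewrite hnf !natrM h mulr0 mul0r eqxx //.
have hnR : (n%:R : rat) = 2 * m%:R + 1 by rewrite /n -addn1 !natrD; ring.
have hm1 : ((m.+1)`!%:R : rat) = (m%:R + 1) * m`!%:R by rewrite factS natrM -addn1 natrD.
have hpR : (p%:R : rat) = 4 * m%:R + 3 by rewrite hp' natrD natrM.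
have hnf' : (n`!%:R : rat) = (2 * m%:R + 1) * S%:R * m`!%:R by rewrite hnf !natrM hnR.
have he : ((-1) ^+ m : rat) = 1 \/ ((-1) ^+ m : rat) = -1.
  by rewrite -signr_odd; case: (odd m) => /=; [right | left]; rewrite ?expr1 ?expr0.
have n0 : (2 * m%:R + 1 : rat) != 0 by rewrite -hnR pnatr_eq0.
have PR0' := PR0; rewrite hK hpR in PR0'.
have T0' := T0; rewrite hpR in T0'.
have F0 := f0 m.
have p0' := p0; rewrite hpR in p0'.
have m10 : (m%:R + 1 : rat) != 0 by apply/eqP => hh; have := @ler0n rat m; lra.
rewrite natrX natrM hnf' hm1 hK hpR (exprS (-1 : rat) m) mulN1r.
move: he PR0' T0' F0 S0 n0 p0' m10; move: ((-1) ^+ m : rat) (m%:R : rat) (q%:R : rat) (S%:R : rat) (m`!%:R : rat) (K%:~R : rat).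
move=> e mm qq SS FF KK he g1 g2 g3 g4 g5 g6 g7.
case: he => he; subst e; rewrite ?mul1r in g1; field; by rewrite g1 g2 g3 g4 g5 g6 g7.
Qed.
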